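(* Let $0<k<n$ and let $\mathcal{F}=(\mathcal{F}_{n-k},\dots,\mathcal{F}_2,\mathcal{F}_1)$ be a Ferrers diagram of size $m$ embedded in a $k\times(n-k)$ box. Set $\mathcal{F}_0=k$. Then the number $\mathrm{ind}_m(\mathcal{F})$ of Ferrers diagrams of size $m$ embedded in a $k\times(n-k)$ box that precede $\mathcal{F}$ in the order defined below is \[\mathrm{ind}_m(\mathcal{F})=\sum_{j=1}^{n-k}\ \sum_{a=\mathcal{F}_j+1}^{\mathcal{F}_{j-1}} p\Bigl(a,\,n-k-j,\,m-\sum_{i=1}^{j-1}\mathcal{F}_i-a\Bigr).\]
   Context: A Ferrers diagram embedded in a $k\times(n-k)$ box is represented by an integer vector $(\mathcal{F}_{n-k},\dots,\mathcal{F}_1)$ with $0\le\mathcal{F}_{i+1}\le\mathcal{F}_i\le k$ for $1\le i\le n-k-1$, where $\mathcal{F}_i$ is the number of dots in the $i$-th column, columns numbered from right to left; its size is $\sum_i\mathcal{F}_i$. Order on diagrams of the same size: $\mathcal{F}<\widetilde{\mathcal{F}}$ if $\mathcal{F}_i>\widetilde{\mathcal{F}}_i$ for the least index $i$ with $\mathcal{F}_i\ne\widetilde{\mathcal{F}}_i$. $p(a,\eta,s)$ is the number of partitions of $s$ whose Ferrers diagram fits in an $a\times\eta$ box, with $p(a,\eta,0)=1$ and $p(a,\eta,s)=0$ if $s<0$ or $s>a\eta$. An empty inner sum is $0$. *)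

(* Defs.v *)
From mathcomp Require Import all_boot all_order all_algebra.
Set Implicit Arguments. Unset Strict Implicit. Unset Printing Implicit Defensive.
Import GRing.Theory Num.Theory.

(* A candidate diagram with c columns, each of height at most k:
   F i (i : 'I_c) is the number of dots in column i+1 (columns numbered
   from right to left, so F ord0 = F_1). *)
Definition diag (k c : nat) := {ffun 'I_c -> 'I_k.+1}.

Definition is_ferrers (k c : nat) (F : diag k c) : bool :=
  [forall i : 'I_c, forall j : 'I_c, (i <= j) ==> (val (F j) <= val (F i))].

Definition dsize (k c : nat) (F : diag k c) : nat := \sum_(i < c) val (F i).

Definition dlt (k c : nat) (F G : diag k c) : bool :=
  [exists i : 'I_c, [forall j : 'I_c, (j < i) ==> (F j == G j)]
                    && (val (G i) < val (F i))].

Definition ferrers_ind (k c m : nat) (F : diag k c) : nat :=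
  #|[set G : diag k c | [&& is_ferrers G, dsize G == m & dlt G F]]|.

(* p(a, eta, s): number of partitions of s whose Ferrers diagram fits in an
   a x eta box, i.e. Ferrers diagrams with eta columns of height <= a and
   s dots; 0 for negative s. *)
Definition pbox (a eta : nat) (s : int) : nat :=
  match s with
  | Posz s' => #|[set G : diag a eta | is_ferrers G && (dsize G == s')]|
  | Negz _ => 0
  end.

Definition fcol (k c : nat) (F : diag k c) (j : nat) : nat :=
  match j with
  | 0 => k
  | j'.+1 => oapp (fun i : 'I_c => val (F i)) 0 (insub j')
  end.

Arguments is_ferrers {k c} F.
Arguments dsize {k c} F.
Arguments dlt {k c} F G.
Arguments ferrers_ind {k c} m F.
Arguments fcol {k c} F j.

(* Main.v *)
Require Import Defs.
From mathcomp Require Import all_boot all_order all_algebra.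
Import GRing.Theory Num.Theory.

Fixpoint allseqs (k c : nat) : seq (seq nat) :=
  if c is c'.+1 then [seq x :: s | x <- iota 0 k.+1, s <- allseqs k c'] else [:: [::]].

Lemma allseqsS k c : allseqs k c.+1 =
  flatten [seq [seq x :: s | s <- allseqs k c] | x <- iota 0 k.+1].
Proof. by []. Qed.

Lemma count_allseqsS P k c : count P (allseqs k c.+1) =
  \sum_(0 <= x < k.+1) count (fun s => P (x :: s)) (allseqs k c).
Proof.
rewrite allseqsS count_flatten -map_comp sumnE big_map /index_iota subn0.
by apply: eq_bigr => i _ /=; rewrite count_map.
Qed.

Lemma mem_allseqs k c s : (s \in allseqs k c) = (size s == c) && all (fun x => x <= k) s.
Proof.
elim: c s => [|c IH] s.
  by case: s => [|x s]; rewrite ?inE.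
have -> : allseqs k c.+1 = [seq x :: s | x <- iota 0 k.+1, s <- allseqs k c] by [].
case: s => [|x s].
  by apply/allpairsP => -[[a b]] /= [] _ _.
apply/allpairsP/andP => [[[a b]] [ha hb [-> ->]]|[hs /andP[hx ha]]].
  move: hb; rewrite IH => /andP[/eqP hs hb]; split; first by rewrite /= hs.
  by rewrite /= hb andbT; move: ha; rewrite mem_iota.
exists (x, s); split => //; first by rewrite mem_iota.
by rewrite IH; apply/andP; split; [move: hs => /= /eqP[->] | exact: ha].
Qed.

Lemma uniq_allseqs k c : uniq (allseqs k c).
Proof.
elim: c => [|c IH] //; apply: allpairs_uniq => //; first exact: iota_uniq.
by move=> [a b] [a' b'] _ _ /= [-> ->].
Qed.

Fixpoint prec (s t : seq nat) : bool :=
  match s, t with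
  | x :: s', y :: t' => (y < x) || ((x == y) && prec s' t')
  | _, _ => false
  end.

Definition Cnt a eta (z : int) : nat :=
  count (fun u => pairwise geq u && (Posz (sumn u) == z)) (allseqs a eta).

Lemma restrict c y k (Q : pred (seq nat)) : y <= k ->
  count (fun s => all (geq y) s && Q s) (allseqs k c) = count Q (allseqs y c).
Proof.
move=> hyk; elim: c Q => [|c IH] Q; first by [].
rewrite !count_allseqsS.
rewrite (big_cat_nat _ (n := y.+1)) //=.
rewrite [X in _ + X]big1_seq ?addn0; last first.
  move=> x /andP[_]; rewrite mem_iota => /andP[hx _].
  by apply/eqP; rewrite -leqn0 leqNgt -has_count; apply/hasP => -[s _] /=; rewrite leqNgt hx.
apply: eq_big_nat => x /andP[_ hx]; rewrite -(IH (fun s => Q (x :: s))).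
by apply: eq_count => s /=; rewrite -ltnS hx.
Qed.

Lemma eqZ (x n : nat) (m : int) : (Posz (x + n) == m) = (Posz n == (m - Posz x)%R).
Proof. by rewrite [(Posz n == _)]eq_sym GRing.subr_eq eq_sym PoszD addrC. Qed.

Lemma main_list c : forall k (t : seq nat) (m : int),
  size t = c -> all (geq k) t -> pairwise geq t ->
  count (fun s => [&& pairwise geq s, Posz (sumn s) == m & prec s t]) (allseqs k c)
  = \sum_(j < c) \sum_((nth 0 t j).+1 <= a < (nth k (k :: t) j).+1)
       Cnt a (c - j.+1) (m - Posz (sumn (take j t)) - Posz a)%R.
Proof.
elim: c => [|c IH] k [|y t] m //.
  by rewrite big_ord0 /= andbF.
move=> [hs] /andP[hyk hk] /andP[hy hp].
rewrite count_allseqsS big_ord_recl /=.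
rewrite (big_cat_nat _ (n := y.+1)) //= (big_cat_nat _ (m := 0) (n := y)) //=.
rewrite big1_seq ?add0n; last first.
  move=> x /andP[_]; rewrite mem_iota add0n subn0 => /andP[_ hx].
  apply/eqP; rewrite -leqn0 leqNgt -has_count; apply/hasP => -[s _] /=.
  by rewrite ltnNge (ltnW hx) /= (ltn_eqF hx) => /and4P[].
rewrite big_nat1 addnC; congr (_ + _).
  apply: eq_big_nat => x /andP[hx hxk]; rewrite subSS subn0 subr0 /Cnt.
  rewrite -(@restrict c x k) //; apply: eq_count => s /=.
  by rewrite hx /= eqZ andbT andbA.
rewrite ltnn eqxx /=.
rewrite (eq_count (a2 := fun s => all (geq y) s &&
   [&& pairwise geq s, Posz (sumn s) == (m - Posz y)%R & prec s t])); last first.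
  by move=> s /=; rewrite eqZ !andbA.
rewrite restrict // IH //; apply: eq_bigr => i _.
rewrite add0n subSS (@set_nth_default _ _ y k); last by rewrite /= ltnS hs ltnW.
by apply: eq_bigr => a _; rewrite PoszD opprD addrA.
Qed.

Definition tl k c (G : diag k c) : seq nat := [seq val (G i) | i <- enum 'I_c].
Arguments tl {k c} G.

Lemma size_tl k c (G : diag k c) : size (tl G) = c.
Proof. by rewrite size_map size_enum_ord. Qed.

Lemma nth_tl k c (G : diag k c) (i : 'I_c) : nth 0 (tl G) i = val (G i).
Proof.
rewrite (nth_map i) ?size_enum_ord //; congr (val (G _)).
by apply: val_inj; rewrite /= nth_enum_ord.
Qed.

Lemma tl_inj k c : injective (@tl k c).
Proof.
move=> G H e; apply/ffunP => i; apply: val_inj.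
by rewrite -!nth_tl e.
Qed.

Lemma card_tl k c (P : pred (seq nat)) :
  #|[set G : diag k c | P (tl G)]| = count P (allseqs k c).
Proof.
rewrite cardsE cardE /enum_mem size_filter -enumT.
rewrite (eq_count (a2 := preim (@tl k c) P)) // -count_map.
apply/permP; apply: uniq_perm.
- by rewrite map_inj_uniq ?enum_uniq //; exact: tl_inj.
- exact: uniq_allseqs.
move=> s; rewrite mem_allseqs; apply/mapP/andP => [[G _ ->]|[/eqP hs ha]].
  split; first by rewrite size_tl.
  apply/allP => x /mapP[i _ ->]; rewrite -ltnS; exact: ltn_ord.
exists [ffun i : 'I_c => (inord (nth 0 s i) : 'I_k.+1)]; first by rewrite mem_enum.
apply: (@eq_from_nth _ 0); first by rewrite size_tl.
move=> i; rewrite hs => hi.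
rewrite -[i]/(nat_of_ord (Ordinal hi)) nth_tl ffunE /= inordK //.
by rewrite ltnS; apply: (all_nthP 0 ha); rewrite hs.
Qed.

Lemma ferrers_tl k c (G : diag k c) : is_ferrers G = pairwise geq (tl G).
Proof.
apply/forallP/(pairwiseP 0) => [H i j hi hj hij|H i].
  rewrite -topredE /= size_tl in hi hj.
  have := H (Ordinal hi) => /forallP /(_ (Ordinal hj)) /implyP /= /(_ (ltnW hij)).
  by rewrite -[i]/(nat_of_ord (Ordinal hi)) -[j]/(nat_of_ord (Ordinal hj)) !nth_tl.
apply/forallP => j; apply/implyP => hij.
rewrite leq_eqVlt in hij; case/orP: hij => [/eqP/val_inj -> //|hij].
by rewrite -!nth_tl; apply: H; rewrite // -topredE /= size_tl.
Qed.

Lemma dsize_tl k c (G : diag k c) : dsize G = sumn (tl G).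
Proof. by rewrite /dsize sumnE big_map big_enum. Qed.

Lemma precP s t : size s = size t ->
  reflect (exists i, [/\ i < size s, (forall j, j < i -> nth 0 s j = nth 0 t j)
                        & nth 0 t i < nth 0 s i]) (prec s t).
Proof.
elim: s t => [|x s IH] [|y t] //=.
- by move=> _; constructor => -[i []].
- move=> [hs]; apply: (iffP orP) => [[h|/andP[/eqP e /(IH _ hs) [i [hi hj hl]]]]|].
  + by exists 0.
  + exists i.+1; split => //; case => // j /= hji; exact: hj.
  + case=> -[|i] [hi hj hl]; first by left.
    right; apply/andP; split; first by apply/eqP; exact: (hj 0).
    apply/(IH _ hs); exists i; split => // j hji; exact: (hj j.+1).
Qed.

Lemma dlt_tl k c (G F : diag k c) : dlt G F = prec (tl G) (tl F).
Proof.
apply/existsP/(precP _ _ _); first by rewrite !size_tl.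
- move=> [i /andP[/forallP hj hl]]; exists i; rewrite size_tl; split => //.
    move=> j hji; have hjc : j < c by apply: ltn_trans hji _.
    rewrite -[j]/(nat_of_ord (Ordinal hjc)) !nth_tl.
    by have /implyP /(_ hji) /eqP -> := hj (Ordinal hjc).
  by rewrite !nth_tl.
- move=> [i []]; rewrite size_tl => hi hj hl; exists (Ordinal hi).
  rewrite -!nth_tl hl andbT; apply/forallP => j; apply/implyP => hji.
  by apply/eqP/val_inj; rewrite /= -!nth_tl; apply: hj.
Qed.

Lemma pbox_Cnt a eta z : pbox a eta z = Cnt a eta z.
Proof.
case: z => [s|s] /=.
  rewrite /Cnt (eq_count (a2 := fun u => pairwise geq u && (sumn u == s))) //.
  rewrite -(@card_tl a eta (fun u => pairwise geq u && (sumn u == s))).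
  by apply: eq_card => G; rewrite !inE ferrers_tl dsize_tl.
by rewrite /Cnt (eq_count (a2 := pred0)) ?count_pred0 // => u /=; rewrite andbF.
Qed.

Lemma fcol_tl k c (F : diag k c) j : j <= c -> fcol F j = nth k (k :: tl F) j.
Proof.
case: j => [|j] //= hj.
rewrite (@set_nth_default _ _ 0 k); last by rewrite size_tl.
by rewrite insubT /= -[j]/(nat_of_ord (Ordinal hj)) nth_tl.
Qed.

Lemma sumn_take (t : seq nat) j : sumn (take j t) = \sum_(0 <= i < j) nth 0 t i.
Proof.
elim: t j => [|x t IH] [|j]; try by rewrite big_geq.
  by rewrite /= big1_seq // => i _; rewrite nth_nil.
by rewrite big_nat_recl //= IH.
Qed.

Lemma fcolS k c (F : diag k c) i : i < c -> fcol F i.+1 = nth 0 (tl F) i.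
Proof. by move=> hi; rewrite fcol_tl //= (@set_nth_default _ _ 0 k) ?size_tl. Qed.

Lemma sumfcol k c (F : diag k c) j : j <= c ->
  (\sum_(1 <= i < j.+1) fcol F i)%N = sumn (take j (tl F)).
Proof.
move=> hj; rewrite big_add1 sumn_take /=; apply: eq_big_nat => i /andP[_ hi].
by apply: fcolS; apply: leq_trans hi hj.
Qed.

Theorem theorem7 (n k m : nat) (F : diag k (n - k)) :
  (0 < k)%N -> (k < n)%N -> is_ferrers F -> dsize F = m ->
  ferrers_ind m F =
  (\sum_(1 <= j < (n - k).+1)
     \sum_((fcol F j).+1 <= a < (fcol F j.-1).+1)
        pbox a (n - k - j)
          (m%:Z - (\sum_(1 <= i < j) fcol F i)%N%:Z - a%:Z)%R)%N.
Proof.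
move=> _ _ hF _; set c := n - k.
rewrite /ferrers_ind.
have -> : [set G | [&& is_ferrers G, dsize G == m & dlt G F]] = [set G : diag k c | [&& pairwise geq (tl G),
     Posz (sumn (tl G)) == Posz m & prec (tl G) (tl F)]].
  by apply/setP => G; rewrite !inE ferrers_tl dsize_tl dlt_tl.
rewrite (@card_tl k c (fun s => [&& pairwise geq s, Posz (sumn s) == Posz m & prec s (tl F)])).
have hk : all (geq k) (tl F).
  by apply/allP => x /mapP[i _ ->]; exact: ltnSE (ltn_ord (F i)).
have hp : pairwise geq (tl F) by rewrite -ferrers_tl.
rewrite (@main_list c k (tl F) (Posz m) (size_tl _ _ F) hk hp).
rewrite big_add1 [c.+1.-1]/= big_mkord; apply: eq_bigr => j _.
have hj := ltn_ord j.
rewrite (@fcolS k c F j hj) (@fcol_tl k c F j (ltnW hj)).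
apply: eq_bigr => a _; rewrite pbox_Cnt (@sumfcol k c F j (ltnW hj)).
done.
Qed.
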